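(* For every $\mathbb T\in\mathrm{Tab}_\lambda$ (identified with $1\otimes\mathbb T\in\mathcal M_\lambda$) and every $1\le i\le N$, $\mathbb T\,\Xi_i=s^{\mathrm{CT}_{\mathbb T}[i]}\,\mathbb T$.
   Context: $N\ge2$, $q,s$ indeterminates, $K=\mathbb C(q,s)$. Operators act on the right, composed left to right. $\mathcal H_N(s)$ is generated by $T_1,\dots,T_{N-1}$ with $(T_i+1)(T_i-s)=0$ and the braid relations. $\lambda$ is a partition of $N$ (French convention, rows numbered bottom to top); $\mathrm{Tab}_\lambda$ = reverse standard tableaux (bijective fillings by $1,\dots,N$ strictly decreasing left to right in rows and bottom to top in columns); $\mathrm{CT}_{\mathbb T}[i]$ = column minus row of the cell containing $i$; $\mathbb T^{(i,j)}$ exchanges $i,j$. $V_\lambda$ has basis $\mathrm{Tab}_\lambda$ with right action $\mathbb TT_i=s\mathbb T$ if $i,i+1$ share a row, $-\mathbb T$ if they share a column, and if $i$ is in a higher row than $i+1$, with $m=\mathrm{CT}_{\mathbb T}[i+1]-\mathrm{CT}_{\mathbb T}[i]>0$, $\mathbb TT_i=\frac{s-1}{1-s^m}\mathbb T+\frac{s(1-s^{m+1})(1-s^{m-1})}{(1-s^m)^2}\mathbb T^{(i,i+1)}$; the remaining case is determined by this formula for $\mathbb T^{(i,i+1)}$ and the quadratic relation. $\mathcal M_\lambda=K[x_1,\dots,x_N]\otimes V_\lambda$; with $p^{s_i}$ = $p$ with $x_i,x_{i+1}$ exchanged: $(p\otimes u)\mathbf T_i=(1-s)\frac{x_{i+1}(p-p^{s_i})}{x_i-x_{i+1}}\otimes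 u+p^{s_i}\otimes uT_i$, $(p\otimes u)\mathbf w=p(qx_N,x_1,\dots,x_{N-1})\otimes uT_1\cdots T_{N-1}$, $\mathbf T_i^{-1}=s^{-1}(\mathbf T_i+1-s)$. Cherednik operators: $\Xi_i=s^{i-N}\mathbf T_{i-1}^{-1}\cdots\mathbf T_1^{-1}\mathbf w\mathbf T_{N-1}\cdots\mathbf T_i$. *)

(* Defs.v *)
From HB Require Import structures.
From mathcomp Require Import all_boot all_order all_algebra all_fingroup.
From mathcomp Require Import Rstruct complex.
From mathcomp Require Import mpoly.
From Stdlib Require Import ClassicalEpsilon.

Set Implicit Arguments.
Unset Strict Implicit.
Unset Printing Implicit Defensive.

Import Order.TTheory GRing.Theory Num.Theory.
Local Open Scope ring_scope.

(* K = fraction field of C[q][s]  (inner variable q, outer variable s) *)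
Definition CC : fieldType := complex Rdefinitions.R.
Definition K : fieldType := {fraction {poly {poly CC}}}.
Definition s : K := tofrac ('X : {poly {poly CC}}).
Definition q : K := tofrac ((('X : {poly CC}))%:P : {poly {poly CC}}).

(* Cells are pairs (row, column), 0-based, rows counted bottom to top  *)
(* (French convention); row r of the shape la has length nth 0 la r.   *)
Definition is_partition (N : nat) (la : seq nat) : bool :=
  [&& sorted geq la, all (fun x => 0 < x)%N la & sumn la == N].

Definition in_shape (la : seq nat) (c : nat * nat) : bool :=
  (c.1 < size la)%N && (c.2 < nth 0 la c.1)%N.

(* A filling: the entry k+1 (k : 'I_N) sits in the cell T k. *)
Notation tabT N := {ffun 'I_N -> 'I_N * 'I_N}.

Definition cellnat N (c : 'I_N * 'I_N) : nat * nat := (val c.1, val c.2).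

Definition is_rst N (la : seq nat) (T : tabT N) : bool :=
  [&& injectiveb T,
      [forall k, in_shape la (cellnat (T k))],
      [forall c : 'I_N * 'I_N, in_shape la (cellnat c) ==> (c \in codom T)],
      [forall k, forall l,
         (((T k).1 == (T l).1) && ((T k).2 < (T l).2)%N) ==> (l < k)%N] &
      [forall k, forall l,
         (((T k).2 == (T l).2) && ((T k).1 < (T l).1)%N) ==> (l < k)%N]].

(* cell (row, column) of the entry i (1 <= i <= N) *)
Definition cellT N (T : tabT N) (i : nat) : nat * nat :=
  if (insub i.-1 : option 'I_N) is Some k then cellnat (T k) else (0, 0)%N.
Definition rowT N (T : tabT N) i := (cellT T i).1.
Definition colT N (T : tabT N) i := (cellT T i).2.
Definition CT N (T : tabT N) (i : nat) : int := (colT T i)%:Z - (rowT T i)%:Z.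

Definition tswap N (T : tabT N) (i j : nat) : tabT N :=
  match (insub i.-1 : option 'I_N), (insub j.-1 : option 'I_N) with
  | Some a, Some b => [ffun k => T (tperm a b k)]
  | _, _ => T
  end.

(* The module V_la (vectors = K-valued functions on fillings; the      *)
(* basis vector of a tableau T is bv T) and the right action of T_i.   *)
Notation Vsp N := {ffun tabT N -> K}.

Definition bv N (T : tabT N) : Vsp N := [ffun T' => (T' == T)%:R].

Definition vscale N (c : K) (v : Vsp N) : Vsp N := [ffun T => c * v T].

Definition coefA (m : int) : K := (s - 1) / (1 - s ^ m).
Definition coefB (m : int) : K :=
  s * (1 - s ^ (m + 1)) * (1 - s ^ (m - 1)) / (1 - s ^ m) ^+ 2.

Definition actT N (T : tabT N) (i : nat) : Vsp N :=
  if rowT T i == rowT T i.+1 then vscale s (bv T)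
  else if colT T i == colT T i.+1 then - bv T
  else if (rowT T i.+1 < rowT T i)%N then
    (* i in a higher row than i+1 : m = CT[i+1] - CT[i] > 0 *)
    let m := CT T i.+1 - CT T i in
    vscale (coefA m) (bv T) + vscale (coefB m) (bv (tswap T i i.+1))
  else
    (* remaining case: with T' = T^{(i,i+1)} (for which the previous
       formula gives T' T_i = a T' + b T), the quadratic relation
       T_i^2 = (s-1) T_i + s forces T T_i = (s-1-a) T + ((s-1-a)a+s)/b T'. *)
    let T' := tswap T i i.+1 in
    let m' := CT T' i.+1 - CT T' i in
    vscale (s - 1 - coefA m') (bv T)
      + vscale (((s - 1 - coefA m') * coefA m' + s) / coefB m') (bv T').

Definition actV N (v : Vsp N) (i : nat) : Vsp N :=
  \sum_(T : tabT N) vscale (v T) (actT T i).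

(* M_la = K[x_1..x_N] (x) V_la : functions from fillings to            *)
(* polynomials; p (x) u is tens p u.                                   *)
Notation Msp N := {ffun tabT N -> {mpoly K[N]}}.

Definition tens N (p : {mpoly K[N]}) (u : Vsp N) : Msp N := [ffun T => u T *: p].

(* the variable x_{k+1} (0-based index k) *)
Definition mkX N (k : nat) : {mpoly K[N]} :=
  if (insub k : option 'I_N) is Some o then 'X_o else 0.

(* p^{s_i} : exchange x_i and x_{i+1} *)
Definition swapn (i j : nat) : nat :=
  if j == i.-1 then i else if j == i then i.-1 else j.
Definition psw N (i : nat) (p : {mpoly K[N]}) : {mpoly K[N]} :=
  p \mPo [tuple mkX N (swapn i j) | j < N].

(* p(q x_N, x_1, ..., x_{N-1}) *)
Definition pshift N (p : {mpoly K[N]}) : {mpoly K[N]} :=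
  p \mPo [tuple (if val j == 0%N then q *: mkX N N.-1 else mkX N (val j).-1) | j < N].

Definition divq N (a b : {mpoly K[N]}) : {mpoly K[N]} :=
  epsilon (inhabits 0) (fun r => r * b = a).

Definition opT N (i : nat) (F : Msp N) : Msp N :=
  \sum_(T : tabT N)
    (tens ((1 - s) *: divq (mkX N i * (F T - psw i (F T)))
                           (mkX N i.-1 - mkX N i)) (bv T)
     + tens (psw i (F T)) (actT T i)).

Definition opTinv N (i : nat) (F : Msp N) : Msp N :=
  s^-1 *: (opT i F + (1 - s) *: F).

Definition opw N (F : Msp N) : Msp N :=
  \sum_(T : tabT N)
    tens (pshift (F T)) (foldl (@actV N) (bv T) (iota 1 N.-1)).

(* Cherednik operator Xi_i = s^{i-N} T_{i-1}^{-1} ... T_1^{-1} w T_{N-1} ... T_i,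
   operators acting on the right, composed left to right. *)
Definition Xi N (i : nat) (F : Msp N) : Msp N :=
  s ^ (i%:Z - N%:Z) *:
    foldl (fun G j => opT j G)
      (opw (foldl (fun G j => opTinv j G) F (rev (iota 1 i.-1))))
      (rev (iota i (N - i))).

(* Main.v *)
Require Import Defs.
From HB Require Import structures.
From mathcomp Require Import all_boot all_order all_algebra all_fingroup.
From mathcomp Require Import Rstruct complex.
From mathcomp Require Import mpoly.
From mathcomp Require Import ring zify.
From Stdlib Require Import ClassicalEpsilon.
Set Implicit Arguments.
Unset Strict Implicit.
Unset Printing Implicit Defensive.

Lemma cellT_ord N (T : tabT N) (k : 'I_N) : cellT T k.+1 = cellnat (T k).
Proof. rewrite /cellT /= (insubT (fun x => x < N)%N (ltn_ord k)) /=. do 2 f_equal; exact: val_inj. Qed.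

Lemma rst_inj N la (T : tabT N) : is_rst la T -> injective T.
Proof. by case/and5P => /injectiveP. Qed.

Lemma rst_shape N la (T : tabT N) k : is_rst la T -> in_shape la (cellnat (T k)).
Proof. by case/and5P => _ /forallP. Qed.

Lemma rst_onto N la (T : tabT N) (c : 'I_N * 'I_N) : is_rst la T ->
  in_shape la (cellnat c) -> exists k, T k = c.
Proof.
case/and5P => _ _ /forallP H _ _ /(implyP (H c)) /codomP [k ->]; by exists k.
Qed.

Lemma rst_row N la (T : tabT N) k l : is_rst la T ->
  (T k).1 = (T l).1 -> ((T k).2 < (T l).2)%N -> (l < k)%N.
Proof.
case/and5P => _ _ _ /forallP H _ e lt; have := forallP (H k) l.
by rewrite e eqxx lt /=.
Qed.

Lemma rst_col N la (T : tabT N) k l : is_rst la T ->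
  (T k).2 = (T l).2 -> ((T k).1 < (T l).1)%N -> (l < k)%N.
Proof.
case/and5P => _ _ _ _ /forallP H e lt; have := forallP (H k) l.
by rewrite e eqxx lt /=.
Qed.

Lemma rst_base N la (T : tabT N) (k : 'I_N) : is_partition N la -> is_rst la T ->
  (k : nat) = N.-1 -> val (T k).1 = 0%N /\ val (T k).2 = 0%N.
Proof.
move=> hp hT hk.
have hN : (0 < N)%N by case: k hk => [[|m] h] //= _; lia.
have /andP[hr hc] := rst_shape k hT; rewrite /cellnat /= in hr hc.
have c0 : val (T k).2 = 0%N.
  have [->//|hpos] := posnP (val (T k).2).
  have hsh : in_shape la (cellnat ((T k).1, Ordinal hN)).
    by rewrite /in_shape /cellnat /= hr /= (leq_ltn_trans (leq0n _) hc).
  have [l hl] := rst_onto hT hsh.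
  have := rst_row (k:=l) (l:=k) hT; rewrite hl /= => /(_ erefl hpos).
  by move=> h; exfalso; have := ltn_ord l; lia.
split => //.
have [->//|hpos] := posnP (val (T k).1).
have hs0 : (0 < size la)%N by lia.
have hsh : in_shape la (cellnat (Ordinal hN, Ordinal hN)).
  rewrite /in_shape /cellnat /= hs0 /=.
  by case/and3P: hp => _ /(all_nthP 0%N) /(_ 0%N hs0).
have [l hl] := rst_onto hT hsh.
have := rst_col (k:=l) (l:=k) hT; have e : Ordinal hN = (T k).2 by apply: val_inj; rewrite /= c0.
rewrite hl /= => /(_ e hpos).
by move=> h; exfalso; have := ltn_ord l; lia.
Qed.

Lemma cell_eq N (c d : 'I_N * 'I_N) : nat_of_ord c.1 = nat_of_ord d.1 -> nat_of_ord c.2 = nat_of_ord d.2 -> c = d.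
Proof. by case: c d => [c1 c2] [d1 d2] /= /val_inj -> /val_inj ->. Qed.

Lemma rst_same_row N la (T : tabT N) (a b : 'I_N) : is_rst la T ->
  (b : nat) = (a : nat).+1 -> nat_of_ord (T a).1 = nat_of_ord (T b).1 ->
  nat_of_ord (T a).2 = ((T b).2).+1.
Proof.
move=> hT hab e1.
have hba : a != b by apply/eqP => /(congr1 val) /=; lia.
have ne : nat_of_ord (T a).2 != nat_of_ord (T b).2.
  apply/eqP => e2; move/eqP: hba; apply; apply: (rst_inj hT); exact: cell_eq.
case: (ltngtP (nat_of_ord (T a).2) (nat_of_ord (T b).2)) ne => // h _.
  have := rst_row (k:=a) (l:=b) hT (val_inj e1) h; lia.
case: (ltngtP (nat_of_ord (T a).2) ((T b).2).+1) => // h2.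
  lia.
have hsa := rst_shape a hT; move: hsa; rewrite /in_shape /cellnat /= => /andP[hr hc].
have hN : (((T b).2).+1 < N)%N by have := ltn_ord (T a).2; lia.
have hsh : in_shape la (cellnat ((T a).1, Ordinal hN)).
  by rewrite /in_shape /cellnat /= hr /=; lia.
have [l hl] := rst_onto hT hsh.
have h3 := rst_row (k:=b) (l:=l) hT; rewrite hl /= in h3.
have h4 := rst_row (k:=l) (l:=a) hT; rewrite hl /= in h4.
have := h3 (esym (val_inj e1)) (ltnSn _).
have := h4 erefl h2.
lia.
Qed.

Lemma part_nth N la r1 r2 : is_partition N la -> (r1 <= r2)%N -> (r2 < size la)%N ->
  (nth 0 la r2 <= nth 0 la r1)%N.
Proof.
case/and3P => hs _ _ h12 h2.
have h1 : (r1 < size la)%N by lia.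
have := @sorted_leq_nth nat geq (fun x y z h1 h2 => leq_trans h2 h1) (fun x => leqnn x) 0%N la hs r1 r2.
by rewrite !inE; apply.
Qed.

Lemma rst_same_col N la (T : tabT N) (a b : 'I_N) : is_partition N la -> is_rst la T ->
  (b : nat) = (a : nat).+1 -> nat_of_ord (T a).2 = nat_of_ord (T b).2 ->
  nat_of_ord (T a).1 = ((T b).1).+1.
Proof.
move=> hp hT hab e1.
have hba : a != b by apply/eqP => /(congr1 val) /=; lia.
have ne : nat_of_ord (T a).1 != nat_of_ord (T b).1.
  apply/eqP => e2; move/eqP: hba; apply; apply: (rst_inj hT); exact: cell_eq.
case: (ltngtP (nat_of_ord (T a).1) (nat_of_ord (T b).1)) ne => // h _.
  have := rst_col (k:=a) (l:=b) hT (val_inj e1) h; lia.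
case: (ltngtP (nat_of_ord (T a).1) ((T b).1).+1) => // h2.
  lia.
have hsa := rst_shape a hT; move: hsa; rewrite /in_shape /cellnat /= => /andP[hr hc].
have hN : (((T b).1).+1 < N)%N by have := ltn_ord (T a).1; lia.
have hsh : in_shape la (cellnat (Ordinal hN, (T a).2)).
  rewrite /in_shape /cellnat /=; apply/andP; split; first lia.
  apply: leq_trans hc _; apply: part_nth hp _ hr; lia.
have [l hl] := rst_onto hT hsh.
have h3 := rst_col (k:=b) (l:=l) hT; rewrite hl /= in h3.
have h4 := rst_col (k:=l) (l:=a) hT; rewrite hl /= in h4.
have := h3 (esym (val_inj e1)) (ltnSn _).
have := h4 erefl h2.
lia.
Qed.

Lemma rst_content N la (T : tabT N) (a b : 'I_N) : is_rst la T ->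
  (b : nat) = (a : nat).+1 ->
  nat_of_ord (T a).1 != nat_of_ord (T b).1 -> nat_of_ord (T a).2 != nat_of_ord (T b).2 ->
  (((T a).2 : int) - ((T a).1 : int) != ((T b).2 : int) - ((T b).1 : int))%R.
Proof.
move=> hT hab n1 n2; apply/eqP => ec.
have key : forall x y : 'I_N, ((x : nat) = y.+1 \/ (y : nat) = x.+1) ->
   ((T x).1 < (T y).1)%N -> (((T x).2 : int) - ((T x).1 : int) = ((T y).2 : int) - ((T y).1 : int))%R -> False.
  move=> x y hxy hr e.
  have hc : ((T x).2 < (T y).2)%N by lia.
  have /andP[hry hcy] := rst_shape y hT; rewrite /cellnat /= in hry hcy.
  have hsh : in_shape la (cellnat ((T y).1, (T x).2)).
    by rewrite /in_shape /cellnat /= hry /=; lia.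
  have [l hl] := rst_onto hT hsh.
  have h3 := rst_row (k:=l) (l:=y) hT; rewrite hl /= in h3.
  have h4 := rst_col (k:=x) (l:=l) hT; rewrite hl /= in h4.
  have := h3 erefl hc; have := h4 erefl hr; lia.
case: (ltngtP (nat_of_ord (T a).1) (nat_of_ord (T b).1)) n1 => // h _.
  by apply: (key a b) => //; right.
by apply: (key b a) => //; left.
Qed.

Lemma ord_neq N (x y : 'I_N) : x <> y -> (x : nat) <> y.
Proof. by move=> h e; apply: h; apply: val_inj. Qed.

Lemma tperm_lt N (a b k l : 'I_N) : (b : nat) = (a : nat).+1 ->
  ~ (k = a /\ l = b) -> ~ (k = b /\ l = a) ->
  (tperm a b l < tperm a b k)%N -> (l < k)%N.
Proof.
move=> hab h1 h2.
case: (tpermP a b l) => [el|el|nl1 nl2]; case: (tpermP a b k) => [ek|ek|nk1 nk2];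
  subst => //=; try lia;
  repeat match goal with H : ?x <> ?y |- _ => move/ord_neq in H end; try lia.
by move=> _; exfalso; apply: h1.
Qed.

Lemma tswap_ord N (T : tabT N) (a b : 'I_N) :
  tswap T a.+1 b.+1 = [ffun k => T (tperm a b k)].
Proof.
rewrite /tswap /= (insubT (fun x => x < N)%N (ltn_ord a)) (insubT (fun x => x < N)%N (ltn_ord b)).
have ea : Sub (nat_of_ord a) (ltn_ord a) = a by apply: val_inj.
have eb : Sub (nat_of_ord b) (ltn_ord b) = b by apply: val_inj.
by rewrite ea eb.
Qed.

Lemma tswapK N (T : tabT N) (a b : 'I_N) :
  tswap (tswap T a.+1 b.+1) a.+1 b.+1 = T.
Proof. by rewrite !tswap_ord; apply/ffunP => k; rewrite !ffunE tpermK. Qed.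

Lemma tswap_a N (T : tabT N) (a b : 'I_N) : tswap T a.+1 b.+1 a = T b.
Proof. by rewrite tswap_ord ffunE tpermL. Qed.

Lemma tswap_b N (T : tabT N) (a b : 'I_N) : tswap T a.+1 b.+1 b = T a.
Proof. by rewrite tswap_ord ffunE tpermR. Qed.

Lemma tswap_rst N la (T : tabT N) (a b : 'I_N) : is_rst la T ->
  (b : nat) = (a : nat).+1 ->
  nat_of_ord (T a).1 != nat_of_ord (T b).1 -> nat_of_ord (T a).2 != nat_of_ord (T b).2 ->
  is_rst la (tswap T a.+1 b.+1).
Proof.
move=> hT hab n1 n2; rewrite tswap_ord; apply/and5P; split.
- apply/injectiveP => x y; rewrite !ffunE => /(rst_inj hT); exact: perm_inj.
- by apply/forallP => k; rewrite ffunE; apply: rst_shape.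
- apply/forallP => c; apply/implyP => /(rst_onto hT) [l hl].
  by apply/codomP; exists (tperm a b l); rewrite ffunE tpermK hl.
- apply/forallP => k; apply/forallP => l; apply/implyP; rewrite !ffunE => /andP [/eqP e h].
  have := rst_row hT e h; apply: tperm_lt => //.
  + case=> ek el; move: e; rewrite ek el tpermL tpermR => e.
    by move/eqP: n1; apply; rewrite e.
  + case=> ek el; move: e; rewrite ek el tpermL tpermR => e.
    by move/eqP: n1; apply; rewrite e.
- apply/forallP => k; apply/forallP => l; apply/implyP; rewrite !ffunE => /andP [/eqP e h].
  have := rst_col hT e h; apply: tperm_lt => //.
  + case=> ek el; move: e; rewrite ek el tpermL tpermR => e.
    by move/eqP: n2; apply; rewrite e.
  + case=> ek el; move: e; rewrite ek el tpermL tpermR => e.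
    by move/eqP: n2; apply; rewrite e.
Qed.

Import Order.TTheory GRing.Theory Num.Theory.
Local Open Scope ring_scope.

Lemma s_neq0 : s != 0.
Proof. by rewrite /s tofrac_eq0 polyX_eq0. Qed.

Lemma sXn_eq1 (n : nat) : s ^+ n = 1 -> n = 0%N.
Proof.
rewrite /s -tofracXn -tofrac1 => /eqP; rewrite tofrac_eq => /eqP H.
have := congr1 (fun p : {poly {poly CC}} => size p) H.
by rewrite size_polyXn size_poly1; case.
Qed.

Lemma sz_eq1 (m : int) : s ^ m = 1 -> m = 0.
Proof.
case: m => n.
  by move/sXn_eq1 => ->.
rewrite NegzE -exprnN => /eqP; rewrite invr_eq1 => /eqP /sXn_eq1.
by [].
Qed.

Lemma sz_neq0 (m : int) : s ^ m != 0.
Proof. by rewrite expfz_eq0 negb_and s_neq0 orbT. Qed.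

Lemma mkX_val N (k : nat) (hk : (k < N)%N) : mkX N k = 'X_(Ordinal hk).
Proof. by rewrite /mkX insubT. Qed.

Lemma mkX_diff N (j : nat) : (1 <= j)%N -> (j < N)%N -> mkX N j.-1 - mkX N j != 0.
Proof.
move=> h1 h2.
have h3 : (j.-1 < N)%N by rewrite (leq_ltn_trans (leq_pred j)).
rewrite (mkX_val h3) (mkX_val h2) subr_eq0; apply/eqP => /(congr1 (mcoeff U_(Ordinal h2))).
rewrite !mcoeffXU eqxx /=.
have -> : (Ordinal h3 == Ordinal h2) = false.
  by apply/negbTE; rewrite -val_eqE /=; case: j h1 {h2 h3} => // j _ /=; rewrite eqn_leq ltnn andbF.
by move/eqP; rewrite eq_sym oner_eq0.
Qed.

Lemma divq0 N (b : {mpoly K[N]}) : b != 0 -> Defs.divq 0 b = 0.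
Proof.
move=> hb; rewrite /Defs.divq.
have := @epsilon_spec _ (inhabits (0 : {mpoly K[N]})) (fun r : {mpoly K[N]} => r * b = 0) (ex_intro _ (0 : {mpoly K[N]}) (@mul0r _ b)).
by move=> /eqP; rewrite mulf_eq0 (negbTE hb) orbF => /eqP.
Qed.

Lemma psw_const N j (c : K) : psw j (c *: 1 : {mpoly K[N]}) = c *: 1.
Proof. by rewrite /psw comp_mpolyZ comp_mpoly1. Qed.

Lemma pshift_const N (c : K) : pshift (c *: 1 : {mpoly K[N]}) = c *: 1.
Proof. by rewrite /pshift comp_mpolyZ comp_mpoly1. Qed.

Lemma tensE N p (u : Vsp N) T : tens p u T = u T *: p.
Proof. by rewrite /tens ffunE. Qed.

Lemma tens_sum N (I : finType) (F : I -> Vsp N) :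
  \sum_(x : I) tens 1 (F x) = tens 1 (\sum_(x : I) F x).
Proof.
apply/ffunP => T; rewrite tensE !sum_ffunE.
rewrite (eq_bigr (fun x => F x T *: (1 : {mpoly K[N]}))); last by move=> x _; rewrite tensE.
by rewrite scaler_suml.
Qed.


Lemma tens0 N (u : Vsp N) : tens 0 u = 0.
Proof. by apply/ffunP => T; rewrite tensE ffunE scaler0. Qed.

Lemma tens_scale N (c : K) (u : Vsp N) : tens (c *: 1) u = tens 1 (vscale c u).
Proof. by apply/ffunP => T; rewrite !tensE /vscale ffunE scalerA [u T * c]mulrC. Qed.
Lemma opT_term0 N j (p : {mpoly K[N]}) (u : Vsp N) : (1 <= j)%N -> (j < N)%N ->
  tens ((1 - s) *: Defs.divq (mkX N j * (p - p)) (mkX N j.-1 - mkX N j)) u = 0.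
Proof.
move=> h1 h2; apply/ffunP => T; rewrite tensE ffunE subrr mulr0 divq0 ?mkX_diff //.
by rewrite !scaler0.
Qed.

Lemma opT_const N j (v : Vsp N) : (1 <= j)%N -> (j < N)%N ->
  opT j (tens 1 v) = tens 1 (actV v j).
Proof.
move=> h1 h2; rewrite /opT /actV -tens_sum; apply: eq_bigr => T _.
rewrite tensE psw_const opT_term0 //.

rewrite add0r tens_scale.

reflexivity. Qed.

Lemma vscaleE N c (v : Vsp N) U : vscale c v U = c * v U.
Proof. by rewrite /vscale ffunE. Qed.

Lemma bvE N (T U : tabT N) : bv T U = (U == T)%:R.
Proof. by rewrite /bv ffunE. Qed.

Lemma actV_bv N (T : tabT N) j : actV (bv T) j = actT T j.
Proof.
rewrite /actV (bigD1 T) //= big1 => [|T' hT'].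
  by rewrite addr0; apply/ffunP => U; rewrite /vscale /bv !ffunE eqxx mul1r.
by apply/ffunP => U; rewrite /vscale /bv !ffunE (negbTE hT') mul0r.
Qed.

Lemma actVD N (u w : Vsp N) j : actV (u + w) j = actV u j + actV w j.
Proof.
rewrite /actV -big_split; apply: eq_bigr => T _; apply/ffunP => U.
by rewrite /vscale !ffunE mulrDl.
Qed.

Lemma actVZ N c (u : Vsp N) j : actV (vscale c u) j = vscale c (actV u j).
Proof.
apply/ffunP => U; rewrite /actV {1}/vscale ffunE !sum_ffunE mulr_sumr; apply: eq_bigr => T _.
by rewrite /vscale !ffunE mulrA.
Qed.

Lemma rowT_ord N (T : tabT N) (k : 'I_N) : rowT T k.+1 = (T k).1.
Proof. by rewrite /rowT cellT_ord. Qed.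
Lemma colT_ord N (T : tabT N) (k : 'I_N) : colT T k.+1 = (T k).2.
Proof. by rewrite /colT cellT_ord. Qed.
Lemma CT_ord N (T : tabT N) (k : 'I_N) :
  CT T k.+1 = ((T k).2 : nat)%:Z - ((T k).1 : nat)%:Z.
Proof. by rewrite /CT rowT_ord colT_ord. Qed.

Lemma actT_row N (T : tabT N) (a b : 'I_N) : (b : nat) = (a : nat).+1 ->
  nat_of_ord (T a).1 = (T b).1 -> actT T a.+1 = vscale s (bv T).
Proof.
move=> hab e; rewrite /actT (_ : (a.+2 = b.+1)%N); last by rewrite hab.
by rewrite !rowT_ord e eqxx.
Qed.

Lemma actT_col N (T : tabT N) (a b : 'I_N) : (b : nat) = (a : nat).+1 ->
  nat_of_ord (T a).1 <> (T b).1 -> nat_of_ord (T a).2 = (T b).2 -> actT T a.+1 = - bv T.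
Proof.
move=> hab e1 e2; rewrite /actT (_ : (a.+2 = b.+1)%N); last by rewrite hab.
rewrite !rowT_ord !colT_ord e2 eqxx.
by case: eqP.
Qed.

Lemma actT_hi N (T : tabT N) (a b : 'I_N) : (b : nat) = (a : nat).+1 ->
  nat_of_ord (T a).1 <> (T b).1 -> nat_of_ord (T a).2 <> (T b).2 ->
  ((T b).1 < (T a).1)%N ->
  actT T a.+1 = vscale (Defs.coefA (CT T b.+1 - CT T a.+1)) (bv T)
                + vscale (Defs.coefB (CT T b.+1 - CT T a.+1)) (bv (tswap T a.+1 b.+1)).
Proof.
move=> hab e1 e2 h; rewrite /actT (_ : (a.+2 = b.+1)%N); last by rewrite hab.
rewrite !rowT_ord !colT_ord h.
by case: eqP => // _; case: eqP.
Qed.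

Lemma actT_lo N (T : tabT N) (a b : 'I_N) : (b : nat) = (a : nat).+1 ->
  nat_of_ord (T a).1 <> (T b).1 -> nat_of_ord (T a).2 <> (T b).2 ->
  ((T a).1 < (T b).1)%N ->
  actT T a.+1 = vscale (s - 1 - Defs.coefA (CT T a.+1 - CT T b.+1)) (bv T)
     + vscale (((s - 1 - Defs.coefA (CT T a.+1 - CT T b.+1)) * Defs.coefA (CT T a.+1 - CT T b.+1) + s)
                 / Defs.coefB (CT T a.+1 - CT T b.+1)) (bv (tswap T a.+1 b.+1)).
Proof.
move=> hab e1 e2 h; rewrite /actT (_ : (a.+2 = b.+1)%N); last by rewrite hab.
have -> : CT (tswap T a.+1 b.+1) b.+1 - CT (tswap T a.+1 b.+1) a.+1 = CT T a.+1 - CT T b.+1.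
  by rewrite !CT_ord tswap_a tswap_b.
rewrite !rowT_ord !colT_ord ltnNge (ltnW h) /=.
by case: eqP => // _; case: eqP.
Qed.

Lemma sz_add1 (m : int) : s ^ (m + 1) = s ^ m * s.
Proof. by rewrite expfzDr ?s_neq0 // expr1z. Qed.
Lemma sz_sub1 (m : int) : s ^ (m - 1) = s ^ m / s.
Proof. by rewrite expfzDr ?s_neq0 // exprN1. Qed.

Lemma coef_id (m : int) : m != 0 ->
  (s - 1 - Defs.coefA m) * Defs.coefA m + s = Defs.coefB m.
Proof.
move=> hm; rewrite /Defs.coefA /Defs.coefB sz_add1 sz_sub1.
have hx : 1 - s ^ m != 0.
  by rewrite subr_eq0 eq_sym; apply/eqP => /sz_eq1 /eqP; rewrite (negbTE hm).
have hs := s_neq0.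
move: (s ^ m) hx => x hx.
have h2 : (1 - x) ^+ 2 != 0 by apply: expf_neq0; exact: hx.
have hA : (s - 1) / (1 - x) * (1 - x) = s - 1 by apply: divfK; exact: hx.
set A := (s - 1) / (1 - x) in hA *.
apply: (mulIf h2).
rewrite (divfK h2).
have -> : ((s - 1 - A) * A + s) * (1 - x) ^+ 2 =
  (s - 1) * (A * (1 - x)) * (1 - x) - (A * (1 - x)) ^+ 2 + s * (1 - x) ^+ 2 by ring.
rewrite hA.
have -> : s * (1 - x * s) * (1 - x / s) = (1 - x * s) * (s - x * (s / s)) by ring.
rewrite (divff hs); ring.
Qed.

Lemma coef_BD (m : int) : m != 0 ->
  Defs.coefB m * (((s - 1 - Defs.coefA m) * Defs.coefA m + s) / Defs.coefB m)
  = (s - 1 - Defs.coefA m) * Defs.coefA m + s.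
Proof.
move=> hm; rewrite coef_id //.
have [->|h] := eqVneq (Defs.coefB m) 0; first by rewrite mul0r.
by rewrite divff // mulr1.
Qed.

Lemma actVN N (u : Vsp N) j : actV (- u) j = - actV u j.
Proof.
have -> : - u = vscale (-1) u by apply/ffunP => U; rewrite /vscale !ffunE mulN1r.
rewrite actVZ; apply/ffunP => U; rewrite /vscale !ffunE mulN1r.
by [].
Qed.

Lemma quad_alg1 (A B C D x d d' : K) : C = x - 1 - A -> B * D = C * A + x ->
  A * (A * d + B * d') + B * (C * d' + D * d) = (x - 1) * (A * d + B * d') + x * d.
Proof.
move=> hC hBD.
have -> : A * (A * d + B * d') + B * (C * d' + D * d) =
   A * A * d + A * B * d' + B * C * d' + (B * D) * d by ring.
by rewrite hBD hC; ring.
Qed.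

Lemma quad_alg2 (A' B' C D x d d' : K) : C = x - 1 - A' -> B' * D = C * A' + x ->
  C * (C * d + D * d') + D * (A' * d' + B' * d) = (x - 1) * (C * d + D * d') + x * d.
Proof.
move=> hC hBD.
have -> : C * (C * d + D * d') + D * (A' * d' + B' * d) =
   C * C * d + C * D * d' + D * A' * d' + (B' * D) * d by ring.
by rewrite hBD hC; ring.
Qed.

Lemma quadT N la (T : tabT N) (a b : 'I_N) : is_partition N la -> is_rst la T ->
  (b : nat) = (a : nat).+1 ->
  actV (actT T a.+1) a.+1 = vscale (s - 1) (actT T a.+1) + vscale s (bv T).
Proof.
move=> hp hT hab.
have [e1|n1] := eqVneq (nat_of_ord (T a).1) (T b).1.
  rewrite (actT_row hab e1) actVZ actV_bv (actT_row hab e1).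
  by apply/ffunP => U; rewrite /vscale !ffunE; ring.
have [e2|n2] := eqVneq (nat_of_ord (T a).2) (T b).2.
  rewrite (actT_col hab (elimN eqP n1) e2) actVN actV_bv (actT_col hab (elimN eqP n1) e2).
  by apply/ffunP => U; rewrite /vscale !ffunE; ring.
set T' := tswap T a.+1 b.+1.
have hm : CT T b.+1 - CT T a.+1 != 0.
  rewrite !CT_ord subr_eq0; apply/eqP => e; move: (rst_content hT hab n1 n2); rewrite e eqxx.
  by [].
have hm' : CT T a.+1 - CT T b.+1 != 0 by rewrite -opprB oppr_eq0.
have n1' : nat_of_ord (T' a).1 <> (T' b).1 by rewrite /T' tswap_a tswap_b; move/eqP: n1; apply: contra_not => ->.
have n2' : nat_of_ord (T' a).2 <> (T' b).2 by rewrite /T' tswap_a tswap_b; move/eqP: n2; apply: contra_not => ->.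
have eT'a : T' a = T b by rewrite /T' tswap_a.
have eT'b : T' b = T a by rewrite /T' tswap_b.
have eCT : CT T' a.+1 - CT T' b.+1 = CT T b.+1 - CT T a.+1 by rewrite !CT_ord eT'a eT'b.
have eCT' : CT T' b.+1 - CT T' a.+1 = CT T a.+1 - CT T b.+1 by rewrite !CT_ord eT'a eT'b.
have hK : tswap T' a.+1 b.+1 = T by rewrite /T' tswapK.
case: (ltngtP (nat_of_ord (T a).1) (T b).1) (n1) => // h _.
-
  rewrite (actT_lo hab (elimN eqP n1) (elimN eqP n2) h) actVD !actVZ !actV_bv.
  rewrite (actT_lo hab (elimN eqP n1) (elimN eqP n2) h).
  have h' : ((T' b).1 < (T' a).1)%N by rewrite eT'a eT'b.
  rewrite -/T' (actT_hi hab n1' n2' h') hK eCT'.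
  apply/ffunP => U; rewrite /vscale !ffunE.
  apply: quad_alg2 => //.
  exact: (coef_BD hm').
-
  rewrite (actT_hi hab (elimN eqP n1) (elimN eqP n2) h) actVD !actVZ !actV_bv.
  rewrite (actT_hi hab (elimN eqP n1) (elimN eqP n2) h).
  have h' : ((T' a).1 < (T' b).1)%N by rewrite eT'a eT'b.
  rewrite -/T' (actT_lo hab n1' n2' h') hK eCT.
  apply/ffunP => U; rewrite /vscale !ffunE.
  apply: quad_alg1 => //.
  exact: (coef_BD hm).
Qed.

Definition lin N (f : Vsp N -> Vsp N) :=
  (forall u w, f (u + w) = f u + f w) /\ (forall c u, f (vscale c u) = vscale c (f u)).

Definition Psup N la (v : Vsp N) := forall U, ~~ is_rst la U -> v U = 0.

Lemma lin0 N (f : Vsp N -> Vsp N) : lin f -> f 0 = 0.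
Proof.
case=> hD _; apply: (addrI (f 0)); rewrite -hD !addr0.
by [].
Qed.

Lemma lin_sum N (f : Vsp N -> Vsp N) (F : tabT N -> Vsp N) : lin f ->
  f (\sum_(T : tabT N) F T) = \sum_(T : tabT N) f (F T).
Proof.
move=> hf; apply: (big_morph f (proj1 hf) (lin0 hf)).
Qed.

Lemma decomp N (v : Vsp N) : v = \sum_(T : tabT N) vscale (v T) (bv T).
Proof.
apply/ffunP => U; rewrite sum_ffunE (bigD1 U) //= big1 => [|T hT].
  by rewrite /vscale /bv !ffunE eqxx mulr1 addr0.
by rewrite /vscale /bv !ffunE eq_sym (negbTE hT) mulr0.
Qed.

Lemma lin_decomp N (f : Vsp N -> Vsp N) (v : Vsp N) : lin f ->
  f v = \sum_(T : tabT N) vscale (v T) (f (bv T)).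
Proof.
move=> hf; rewrite {1}(decomp v) lin_sum //; apply: eq_bigr => T _.
by rewrite (proj2 hf).
Qed.

Lemma span_ext N la (f g : Vsp N -> Vsp N) (v : Vsp N) : lin f -> lin g ->
  (forall T, is_rst la T -> f (bv T) = g (bv T)) -> Psup la v -> f v = g v.
Proof.
move=> hf hg H hv; rewrite (lin_decomp v hf) (lin_decomp v hg); apply: eq_bigr => T _.
have [hT|hT] := boolP (is_rst la T); first by rewrite H.
rewrite (hv T hT); apply/ffunP => U; rewrite /vscale !ffunE !mul0r.
by [].
Qed.

Lemma lin_actV N j : lin (fun v : Vsp N => actV v j).
Proof. by split => [u w|c u]; [apply: actVD | apply: actVZ]. Qed.

Lemma lin_comp N (f g : Vsp N -> Vsp N) : lin f -> lin g -> lin (fun v => f (g v)).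
Proof.
move=> [f1 f2] [g1 g2]; split => [u w|c u]; first by rewrite g1 f1.
by rewrite g2 f2.
Qed.

Lemma lin_id N : lin (fun v : Vsp N => v).
Proof. by []. Qed.

Lemma lin_foldl N (L : seq nat) : lin (fun v : Vsp N => foldl (@actV N) v L).
Proof.
elim: L => [|j L IH] /=; first exact: lin_id.
exact: (lin_comp IH (lin_actV N j)).
Qed.

Lemma Psup_bv N la (T : tabT N) : is_rst la T -> Psup la (bv T).
Proof.
move=> hT U hU; rewrite /bv ffunE; case: eqP => [e|_].
  exfalso; move/negP: hU; apply; rewrite e; exact: hT.
exact: mulr0n.
Qed.

Lemma Psup_add N la (u w : Vsp N) : Psup la u -> Psup la w -> Psup la (u + w).
Proof. by move=> hu hw U hU; rewrite ffunE hu // hw // addr0. Qed.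

Lemma Psup_scale N la c (u : Vsp N) : Psup la u -> Psup la (vscale c u).
Proof. by move=> hu U hU; rewrite /vscale ffunE hu // mulr0. Qed.

Lemma Psup_opp N la (u : Vsp N) : Psup la u -> Psup la (- u).
Proof. by move=> hu U hU; rewrite ffunE hu // oppr0. Qed.

Lemma actT_sup N la (T : tabT N) (a b : 'I_N) : is_rst la T ->
  (b : nat) = (a : nat).+1 -> Psup la (actT T a.+1).
Proof.
move=> hT hab.
have [e1|n1] := eqVneq (nat_of_ord (T a).1) (T b).1.
  by rewrite (actT_row hab e1); apply/Psup_scale/Psup_bv.
have [e2|n2] := eqVneq (nat_of_ord (T a).2) (T b).2.
  by rewrite (actT_col hab (elimN eqP n1) e2); apply/Psup_opp/Psup_bv.
have hT' := tswap_rst hT hab n1 n2.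
case: (ltngtP (nat_of_ord (T a).1) (T b).1) (n1) => // h _.
  rewrite (actT_lo hab (elimN eqP n1) (elimN eqP n2) h).
  by apply: Psup_add; apply/Psup_scale/Psup_bv.
rewrite (actT_hi hab (elimN eqP n1) (elimN eqP n2) h).
by apply: Psup_add; apply/Psup_scale/Psup_bv.
Qed.

Lemma actV_sup N la (v : Vsp N) (a b : 'I_N) : (b : nat) = (a : nat).+1 ->
  Psup la v -> Psup la (actV v a.+1).
Proof.
move=> hab hv U hU; rewrite /actV sum_ffunE big1 // => T _.
rewrite /vscale ffunE.
have [hT|hT] := boolP (is_rst la T); last by rewrite hv // mul0r.
by rewrite (actT_sup hT hab hU) mulr0.
Qed.

Lemma quadV N la (v : Vsp N) (a b : 'I_N) : is_partition N la ->
  (b : nat) = (a : nat).+1 -> Psup la v ->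
  actV (actV v a.+1) a.+1 = vscale (s - 1) (actV v a.+1) + vscale s v.
Proof.
move=> hp hab hv.
pose g := fun v : Vsp N => vscale (s - 1) (actV v a.+1) + vscale s v.
have hg : lin g.
  split => [u w|c u]; rewrite /g.
    rewrite actVD; apply/ffunP => U; rewrite /vscale !ffunE; ring.
  rewrite actVZ; apply/ffunP => U; rewrite /vscale !ffunE; ring.
apply: (@span_ext N la (fun v => actV (actV v a.+1) a.+1) g v) => //.
  exact: (lin_comp (lin_actV N a.+1) (lin_actV N a.+1)).
move=> T hT; rewrite /g actV_bv.
exact: (quadT hp hT hab).
Qed.

Definition Ainv N (v : Vsp N) (j : nat) : Vsp N :=
  vscale s^-1 (actV v j + vscale (1 - s) v).

Lemma Ainv_sup N la (v : Vsp N) (a b : 'I_N) : (b : nat) = (a : nat).+1 ->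
  Psup la v -> Psup la (Ainv v a.+1).
Proof.
move=> hab hv; apply: Psup_scale; apply: Psup_add; first exact: (actV_sup hab hv).
exact: Psup_scale.
Qed.

Lemma actV_Ainv N la (v : Vsp N) (a b : 'I_N) : is_partition N la ->
  (b : nat) = (a : nat).+1 -> Psup la v ->
  actV (Ainv v a.+1) a.+1 = v.
Proof.
move=> hp hab hv; rewrite /Ainv actVZ actVD actVZ (quadV hp hab hv).
have hs := s_neq0.
apply/ffunP => U; rewrite /vscale !ffunE.
have -> : s^-1 * ((s - 1) * actV v a.+1 U + s * v U + (1 - s) * actV v a.+1 U)
  = (s^-1 * s) * v U by ring.
by rewrite (mulVf hs) mul1r.
Qed.

Lemma adj_ords N (j : nat) : (0 < j)%N -> (j < N)%N ->
  exists (a b : 'I_N), j = (a : nat).+1 /\ (b : nat) = (a : nat).+1.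
Proof.
move=> h1 h2.
have ha : (j.-1 < N)%N by lia.
exists (Ordinal ha), (Ordinal h2) => /=; lia.
Qed.

Lemma fold_Ainv_sup N la (l : seq nat) (v : Vsp N) :
  all (fun j => (0 < j < N)%N) l -> Psup la v ->
  Psup la (foldl (fun u j => Ainv u j) v l).
Proof.
elim: l v => [|x l IH] v //= /andP[/andP[h1 h2] hl] hv.
apply: IH => //.
have [a [b [-> hab]]] := adj_ords h1 h2.
exact: (Ainv_sup hab hv).
Qed.

Lemma cancel_fold N la (l r : seq nat) (v : Vsp N) : is_partition N la ->
  all (fun j => (0 < j < N)%N) l -> Psup la v ->
  foldl (@actV N) (foldl (fun u j => Ainv u j) v (rev l)) (l ++ r)
  = foldl (@actV N) v r.
Proof.
move=> hp; elim: l v => [|x l IH] v //= /andP[/andP[h1 h2] hl] hv.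
rewrite rev_cons foldl_rcons.
have hw : Psup la (foldl (fun u j => Ainv u j) v (rev l)).
  by apply: fold_Ainv_sup => //; rewrite all_rev.
have [a [b [ex hab]]] := adj_ords h1 h2.
rewrite ex (actV_Ainv hp hab hw).
exact: IH.
Qed.

Lemma step_alg_hi (A B C D X Y x t d d' : K) : A * (1 - x) = t - 1 -> C = t - 1 - A ->
  B * D = C * A + t -> X = x * Y ->
  A * (X * (A * d + B * d')) + B * (Y * (C * d' + D * d)) = t * Y * d.
Proof.
move=> hA hC hBD hX.
have key : A * X + C * Y = 0.
  rewrite hX hC.
  have -> : A * (x * Y) + (t - 1 - A) * Y = Y * ((t - 1) - A * (1 - x)) by ring.
  by rewrite hA subrr mulr0.
have -> : A * (X * (A * d + B * d')) + B * (Y * (C * d' + D * d)) =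
  (A * d + B * d') * (A * X + C * Y) + (B * D) * Y * d - C * A * Y * d by ring.
by rewrite key hBD; ring.
Qed.

Lemma step_alg_lo (A' B' C D X Y x t d d' : K) : A' * (1 - x) = t - 1 -> C = t - 1 - A' ->
  B' * D = C * A' + t -> Y = x * X ->
  C * (X * (C * d + D * d')) + D * (Y * (A' * d' + B' * d)) = t * Y * d.
Proof.
move=> hA hC hBD hY.
have key : C * X + A' * Y = 0.
  rewrite hY hC.
  have -> : (t - 1 - A') * X + A' * (x * X) = X * ((t - 1) - A' * (1 - x)) by ring.
  by rewrite hA subrr mulr0.
have -> : C * (X * (C * d + D * d')) + D * (Y * (A' * d' + B' * d)) =
  (C * d + D * d') * (C * X + A' * Y) + (B' * D) * Y * d - C * A' * Y * d by ring.
by rewrite key hBD; ring.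
Qed.

Lemma coefA_mul (m : int) : m != 0 -> Defs.coefA m * (1 - s ^ m) = s - 1.
Proof.
move=> hm; rewrite /Defs.coefA divfK //.
by rewrite subr_eq0 eq_sym; apply/eqP => /sz_eq1 /eqP; rewrite (negbTE hm).
Qed.

Lemma sz_split (u v : int) : s ^ u = s ^ (u - v) * s ^ v.
Proof. by rewrite -expfzDr ?s_neq0 // subrK. Qed.

Lemma e_gen (n : nat) (c : int) : s ^ ((n.+1)%:Z + c) = s * s ^ (n%:Z + c).
Proof.
have -> : (n.+1)%:Z + c = 1 + (n%:Z + c) by rewrite intS addrA.
by rewrite (expfzDr 1 _ s_neq0) expr1z.
Qed.

Definition Wop N (i : nat) (v : Vsp N) :=
  foldl (@actV N) (foldl (@actV N) v (iota i (N - i))) (rev (iota i (N - i))).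

Lemma W_step N i (v : Vsp N) : (i < N)%N -> Wop i v = actV (Wop i.+1 (actV v i)) i.
Proof.
move=> hi; rewrite /Wop (_ : (N - i = (N - i.+1).+1)%N); last by lia.
by rewrite /= rev_cons foldl_rcons.
Qed.

Lemma lin_W N i : lin (@Wop N i).
Proof. exact: (lin_comp (lin_foldl N _) (lin_foldl N _)). Qed.

Lemma lin_opp N (f : Vsp N -> Vsp N) u : lin f -> f (- u) = - f u.
Proof.
move=> hf.
have -> : - u = vscale (-1) u by apply/ffunP => U; rewrite /vscale !ffunE mulN1r.
rewrite (proj2 hf); apply/ffunP => U; rewrite /vscale !ffunE mulN1r.
by [].
Qed.

Lemma W_tab N la (n : nat) : is_partition N la -> forall i, (N - i = n)%N ->
  (1 <= i <= N)%N -> forall T : tabT N, is_rst la T ->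
  Wop i (bv T) = vscale (s ^ ((N - i)%:Z + CT T i)) (bv T).
Proof.
move=> hp; elim: n => [|n IH] i hn /andP[hi1 hi2] T hT.
  have ei : i = N by lia.
  subst i.
  have hN : (N.-1 < N)%N by lia.
  have [e1 e2] := rst_base (k:=Ordinal hN) hp hT erefl.
  have hct : CT T N = 0.
    have := CT_ord T (Ordinal hN); rewrite /= (_ : N.-1.+1 = N); last by lia.
    by move=> ->; rewrite e1 e2.
  rewrite hct /Wop subnn /= addr0 expr0z.
  by apply/ffunP => U; rewrite /vscale !ffunE mul1r.
have hiN : (i < N)%N by lia.
rewrite W_step //.
have [a [b [ei hab]]] := adj_ords hi1 hiN.
subst i.
have eib : (a.+2 = b.+1)%N by rewrite hab.
rewrite eib.
have IHb : forall U : tabT N, is_rst la U ->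
    Wop b.+1 (bv U) = vscale (s ^ ((N - b.+1)%:Z + CT U b.+1)) (bv U).
  move=> U hU; rewrite -eib; apply: IH => //; lia.
rewrite (_ : (N - a.+1 = (N - b.+1).+1)%N); last by lia.
rewrite e_gen.
have [e1|n1] := eqVneq (nat_of_ord (T a).1) (T b).1.
  have ect : CT T a.+1 = CT T b.+1 + 1.
    by rewrite !CT_ord; have := rst_same_row hT hab e1; lia.
  rewrite actV_bv (actT_row hab e1) (proj2 (lin_W _ _)) (IHb T hT) !actVZ actV_bv (actT_row hab e1).
  rewrite ect.
  have -> : (N - b.+1)%:Z + (CT T b.+1 + 1) = ((N - b.+1)%:Z + CT T b.+1) + 1 by rewrite addrA.
  rewrite (expfzDr ((N - b.+1)%:Z + CT T b.+1) 1 s_neq0) expr1z.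
  by apply/ffunP => U; rewrite /vscale !ffunE; ring.
have [e2|n2] := eqVneq (nat_of_ord (T a).2) (T b).2.
  have ect : CT T a.+1 = CT T b.+1 - 1.
    by rewrite !CT_ord; have := rst_same_col hp hT hab e2; lia.
  rewrite actV_bv (actT_col hab (elimN eqP n1) e2) (lin_opp _ (lin_W _ _)) (IHb T hT).
  rewrite actVN actVZ actV_bv (actT_col hab (elimN eqP n1) e2).
  rewrite ect.
  have -> : (N - b.+1)%:Z + (CT T b.+1 - 1) = ((N - b.+1)%:Z + CT T b.+1) + (-1) by rewrite addrA.
  rewrite (expfzDr ((N - b.+1)%:Z + CT T b.+1) (-1) s_neq0) exprN1.
  have hs := s_neq0.
  apply/ffunP => U; rewrite /vscale !ffunE.
  by rewrite [s * _]mulrC (divfK hs) mulrN opprK.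
set T' := tswap T a.+1 b.+1.
have hT' : is_rst la T' := tswap_rst hT hab n1 n2.
have hm : CT T b.+1 - CT T a.+1 != 0.
  rewrite !CT_ord subr_eq0; apply/eqP => e; move: (rst_content hT hab n1 n2); rewrite e eqxx.
  by [].
have hm' : CT T a.+1 - CT T b.+1 != 0 by rewrite -opprB oppr_eq0.
have n1' : nat_of_ord (T' a).1 <> (T' b).1 by rewrite /T' tswap_a tswap_b; move/eqP: n1; apply: contra_not => ->.
have n2' : nat_of_ord (T' a).2 <> (T' b).2 by rewrite /T' tswap_a tswap_b; move/eqP: n2; apply: contra_not => ->.
have eT'a : T' a = T b by rewrite /T' tswap_a.
have eT'b : T' b = T a by rewrite /T' tswap_b.
have eCT : CT T' a.+1 - CT T' b.+1 = CT T b.+1 - CT T a.+1 by rewrite !CT_ord eT'a eT'b.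
have eCT' : CT T' b.+1 - CT T' a.+1 = CT T a.+1 - CT T b.+1 by rewrite !CT_ord eT'a eT'b.
have eCTb : CT T' b.+1 = CT T a.+1 by rewrite !CT_ord eT'b.
have hK : tswap T' a.+1 b.+1 = T by rewrite /T' tswapK.
have hW := lin_W N b.+1.
case: (ltngtP (nat_of_ord (T a).1) (T b).1) (n1) => // h _.
-
  rewrite actV_bv (actT_lo hab (elimN eqP n1) (elimN eqP n2) h) -/T'.
  rewrite (proj1 hW) !(proj2 hW) (IHb T hT) (IHb T' hT') eCTb.
  rewrite actVD !actVZ !actV_bv.
  rewrite (actT_lo hab (elimN eqP n1) (elimN eqP n2) h) -/T'.
  have h' : ((T' b).1 < (T' a).1)%N by rewrite eT'a eT'b.
  rewrite (actT_hi hab n1' n2' h') hK eCT'.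
  apply/ffunP => U; rewrite /vscale !ffunE.
  apply: (step_alg_lo (x := s ^ (CT T a.+1 - CT T b.+1))).
  + exact: (coefA_mul hm').
  + by [].
  + exact: (coef_BD hm').
  + by rewrite -(expfzDr _ _ s_neq0); congr (s ^ _); ring.
-
  rewrite actV_bv (actT_hi hab (elimN eqP n1) (elimN eqP n2) h) -/T'.
  rewrite (proj1 hW) !(proj2 hW) (IHb T hT) (IHb T' hT') eCTb.
  rewrite actVD !actVZ !actV_bv.
  rewrite (actT_hi hab (elimN eqP n1) (elimN eqP n2) h) -/T'.
  have h' : ((T' a).1 < (T' b).1)%N by rewrite eT'a eT'b.
  rewrite (actT_lo hab n1' n2' h') hK eCT.
  apply/ffunP => U; rewrite /vscale !ffunE.
  apply: (step_alg_hi (x := s ^ (CT T b.+1 - CT T a.+1))).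
  + exact: (coefA_mul hm).
  + by [].
  + exact: (coef_BD hm).
  + by rewrite -(expfzDr _ _ s_neq0); congr (s ^ _); ring.
Qed.

Lemma tensZ N (c : K) (u : Vsp N) : c *: tens 1 u = tens 1 (vscale c u).
Proof.
apply/ffunP => T; rewrite ffunE !tensE /vscale ffunE scalerA.
by [].
Qed.

Lemma tensD N (u w : Vsp N) : tens 1 u + tens 1 w = tens 1 (u + w).
Proof.
apply/ffunP => T; rewrite ffunE !tensE ffunE scalerDl.
by [].
Qed.

Lemma opTinv_const N j (v : Vsp N) : (1 <= j)%N -> (j < N)%N ->
  opTinv j (tens 1 v) = tens 1 (Ainv v j).
Proof.
move=> h1 h2; rewrite /opTinv (opT_const v h1 h2) (tensZ (1 - s) v) tensD.
by rewrite tensZ.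
Qed.

Lemma opw_const N (v : Vsp N) :
  opw (tens 1 v) = tens 1 (foldl (@actV N) v (iota 1 N.-1)).
Proof.
rewrite /opw (lin_decomp v (lin_foldl N (iota 1 N.-1))) -tens_sum.
apply: eq_bigr => T _.
by rewrite tensE pshift_const tens_scale.
Qed.

Lemma fold_opT N (L : seq nat) (v : Vsp N) : all (fun j => (0 < j < N)%N) L ->
  foldl (fun G j => opT j G) (tens 1 v) L = tens 1 (foldl (@actV N) v L).
Proof.
elim: L v => [|j L IH] v //= /andP[/andP[h1 h2] hL].
by rewrite (opT_const v h1 h2) IH.
Qed.

Lemma fold_opTinv N (L : seq nat) (v : Vsp N) : all (fun j => (0 < j < N)%N) L ->
  foldl (fun G j => opTinv j G) (tens 1 v) L = tens 1 (foldl (fun u j => Ainv u j) v L).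
Proof.
elim: L v => [|j L IH] v //= /andP[/andP[h1 h2] hL].
by rewrite (opTinv_const v h1 h2) IH.
Qed.

Theorem proposition3p2 (N : nat) (la : seq nat) (T : tabT N) (i : nat) :
  (2 <= N)%N -> is_partition N la -> is_rst la T -> (1 <= i <= N)%N ->
  Xi i (tens 1 (bv T)) = s ^ (CT T i) *: tens 1 (bv T).
Proof.
move=> hN hp hT /andP[hi1 hi2].
rewrite /Xi fold_opTinv; last first.
  rewrite all_rev; apply/allP => j; rewrite mem_iota => /andP[hj1 hj2]; apply/andP; split; lia.
rewrite opw_const fold_opT; last first.
  apply/allP => j; rewrite mem_rev mem_iota => /andP[hj1 hj2].
  apply/andP; split; lia.
rewrite (_ : N.-1 = i.-1 + (N - i))%N; last by lia.
rewrite iotaD (_ : (1 + i.-1 = i)%N); last by lia.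
rewrite (@cancel_fold N la (iota 1 i.-1) (iota i (N - i)) (bv T) hp); last first.
- exact: Psup_bv.
- apply/allP => j; rewrite mem_iota => /andP[hj1 hj2]; apply/andP; split; lia.
rewrite -/(Wop i (bv T)) (W_tab hp erefl (_ : (1 <= i <= N)%N) hT); last by apply/andP.
rewrite tensZ tensZ; congr (tens 1 _).
apply/ffunP => U; rewrite /vscale !ffunE mulrA -(expfzDr _ _ s_neq0).
congr (s ^ _ * _); lia.
Qed.
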